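(* Let $\{\mathbb{P}_\theta\}$ be a parametric model with log-likelihood $\ell_\theta$, true parameter $\theta_0$, and parameter split into two blocks $\theta=(\theta_1,\theta_2)$; let $G$ be a compact group acting on the sample space with Haar probability measure $\mathbb{Q}$, and suppose the invariant parameter set $\Theta_G$ is $\{\theta:\theta_2=0\}$. Let $I(\theta)=\mathbb{E}_\theta\nabla\ell_\theta\nabla\ell_\theta^\top$ be the Fisher information with blocks $I_{11},I_{12},I_{21},I_{22}$ corresponding to $(\theta_1,\theta_2)$, assumed invertible, and let $\bar I(\theta)=\mathrm{Cov}_\theta\big(\mathbb{E}_{g\sim\mathbb{Q}}\nabla\ell_\theta(gX)\big)$, assumed invertible. Suppose the augmented MLE (aMLE) has asymptotic covariance $I(\theta_0)^{-1}\bar I(\theta_0)I(\theta_0)^{-1}$ and the constrained MLE (cMLE) has asymptotic covariance $I_{11}(\theta_0)^{-1}$ for estimating $\theta_1$. Define $$M_\theta=\begin{bmatrix}I_{11}(\theta)^{-1}&(I(\theta)^{-1})_{1\cdot}\\(I(\theta)^{-1})_{\cdot1}&\bar I(\theta)^{-1}\end{bmatrix},$$ where $(I^{-1})_{1\cdot}$ is the submatrix of $I^{-1}$ consisting of the rows indexed by the coordinates of $\theta_1$ and $(I^{-1})_{\cdot1}$ its transpose (the corresponding columns). Then the aMLE is asymptotically more efficient than the cMLE in estimating $\theta_1$, i.e. $[I(\theta_0)^{-1}\bar I(\theta_0)I(\theta_0)^{-1}]_{11}\preceq I_{11}(\theta_0)^{-1}$, if and only if $M_{\theta_0}$ is positive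 semidefinite.
   Context: The augmented MLE maximizes $\sum_i\int_G\ell_\theta(gX_i)\,d\mathbb{Q}(g)$ over $\theta$; the constrained MLE maximizes $\sum_i\ell_\theta(X_i)$ over $\theta\in\Theta_G$. $[A]_{11}$ denotes the top-left block of $A$ corresponding to $\theta_1$; $\preceq$ is the Loewner order. *)

(* Defs.v *)
From mathcomp Require Import all_boot all_order all_algebra.
Set Implicit Arguments. Unset Strict Implicit. Unset Printing Implicit Defensive.
Import Order.TTheory GRing.Theory Num.Theory.
Local Open Scope ring_scope.

Definition psd (R : realFieldType) (n : nat) (A : 'M[R]_n) : Prop :=
  A^T = A /\ forall v : 'cV[R]_n, 0 <= (v^T *m A *m v) 0 0.

Definition loewner_le (R : realFieldType) (n : nat) (A B : 'M[R]_n) : Prop :=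
  psd (B - A).

(* Block notation for a matrix indexed by (theta_1, theta_2), dims p and q. *)
Definition blk11 (R : realFieldType) (p q : nat) (A : 'M[R]_(p + q)) : 'M[R]_p :=
  ulsubmx A.

Definition Mtheta (R : realFieldType) (p q : nat) (I Ibar : 'M[R]_(p + q))
  : 'M[R]_(p + (p + q)) :=
  block_mx (invmx (blk11 I))      (usubmx (invmx I))
           (lsubmx (invmx I))     (invmx Ibar).

(* Main.v *)
Require Import Defs.
From mathcomp Require Import all_boot all_order all_algebra.
Import Order.TTheory GRing.Theory Num.Theory.
Local Open Scope ring_scope.

Lemma ab4 (V : zmodType) (a b c d e : V) : a + b + (c + d) = a - e + (d + b + c + e).
Proof.
rewrite -!addrA; congr (_ + _). rewrite addrC -!addrA [RHS]addrC !addrA addrK.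
by rewrite -addrA addrC.
Qed.
Lemma quad_id (R : comUnitRingType) m n (A : 'M[R]_m) (B : 'M_(m,n)) (K : 'M_n)
  (x : 'cV_m) (y : 'cV_n) :
  K^T = K -> K \in unitmx ->
  (col_mx x y)^T *m block_mx A B B^T (invmx K) *m col_mx x y =
  x^T *m (A - B *m K *m B^T) *m x +
  (y + K *m B^T *m x)^T *m invmx K *m (y + K *m B^T *m x).
Proof.
move=> hKs hK.
set C := invmx K; set u := K *m B^T *m x.
have hCs : C^T = C by rewrite /C trmx_inv hKs.
have hCu : C *m u = B^T *m x by rewrite /u !mulmxA mulVmx // mul1mx.
have huC : u^T *m C = x^T *m B.
  by rewrite -hCs -trmx_mul hCu trmx_mul trmxK.
have -> : (y + u)^T *m C *m (y + u) =
   y^T *m C *m y + y^T *m B^T *m x + x^T *m B *m y + x^T *m B *m u.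
  rewrite (raddfD trmx) !mulmxDl !mulmxDr huC -!mulmxA hCu.
  by rewrite !addrA; congr (_ + _); rewrite -!addrA; congr (_ + _); rewrite addrC.
have -> : x^T *m (A - B *m K *m B^T) *m x = x^T *m A *m x - x^T *m B *m u.
  by rewrite mulmxBr mulmxBl /u !mulmxA.
rewrite tr_col_mx mul_row_block mul_row_col !mulmxDl.
set a := x^T *m A *m x; set b := y^T *m B^T *m x; set c := x^T *m B *m y.
set d := y^T *m C *m y; set e := x^T *m B *m u.
exact: ab4.
Qed.

Lemma schur (R : realFieldType) m n (A : 'M[R]_m) (B : 'M_(m,n)) (K : 'M_n) :
  A^T = A -> K^T = K -> K \in unitmx -> psd K ->
  psd (block_mx A B B^T (invmx K)) <-> psd (A - B *m K *m B^T).
Proof.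
move=> hAs hKs hK [_ hKp].
have hCs : (invmx K)^T = invmx K by rewrite trmx_inv hKs.
have hCp : forall z : 'cV_n, 0 <= (z^T *m invmx K *m z) 0 0.
  move=> z.
  have -> : z^T *m invmx K *m z = (invmx K *m z)^T *m K *m (invmx K *m z).
    by rewrite trmx_mul hCs -!mulmxA [K *m (_ *m z)]mulmxA mulmxV // mul1mx.
  exact: hKp.
split.
- move=> [_ hM]; split.
    by rewrite (raddfB trmx) /= !trmx_mul trmxK hAs hKs mulmxA.
  move=> v; have := hM (col_mx v (- (K *m B^T *m v))).
  by rewrite quad_id // addNr mulmx0 addr0.
- move=> [hSs hS]; split.
    by rewrite tr_block_mx trmxK hAs hCs.
  move=> w; rewrite -(vsubmxK w) quad_id // mxE.
  exact: addr_ge0.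
Qed.

Theorem proposition4p9 (R : realFieldType) (p q : nat)
    (I Ibar : 'M[R]_(p + q))
    (hI : psd I) (hIinv : I \in unitmx)
    (hIbar : psd Ibar) (hIbarinv : Ibar \in unitmx) :
  loewner_le (blk11 (invmx I *m Ibar *m invmx I)) (invmx (blk11 I))
  <-> psd (Mtheta I Ibar).
Proof.
case: (hI) => hIs _; case: (hIbar) => hIbs _.
set J := invmx I.
have hJs : J^T = J by rewrite /J trmx_inv hIs.
have hAs : (invmx (blk11 I))^T = invmx (blk11 I) by rewrite trmx_inv /blk11 trmx_ulsub hIs.
have hL : lsubmx J = (usubmx J)^T by rewrite trmx_usub hJs.
have hB : blk11 (J *m Ibar *m J) = usubmx J *m Ibar *m (usubmx J)^T.
  rewrite -hL /blk11 /ulsubmx.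
  have -> : J *m Ibar *m J = col_mx (usubmx J *m Ibar *m J) (dsubmx J *m Ibar *m J).
    by rewrite -!mul_col_mx vsubmxK.
  have h : forall X : 'M_(p, p + q), lsubmx (X *m J) = X *m lsubmx J.
    by move=> X; rewrite -{1}(hsubmxK J) mul_mx_row row_mxKl.
  by rewrite col_mxKu h.
rewrite /loewner_le /Mtheta hL hB -/J.

apply: iff_sym; apply: schur => //.
Qed.
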